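(* (1) There exists a minimal monad on $\mathbb{P}^3$ of the form $$\mathcal{O}(-5)\oplus\mathcal{O}(-3)\xrightarrow{\alpha}\mathcal{O}(3)\oplus\mathcal{O}(1)^{\oplus2}\oplus\mathcal{O}(-2)^{\oplus2}\oplus\mathcal{O}(-4)\xrightarrow{\beta}\mathcal{O}(4)\oplus\mathcal{O}(2)$$ (i.e. $\boldsymbol{a}=(4,2)$, $\boldsymbol{b}=(3,1,1)$). (2) There exists a minimal monad on $\mathbb{P}^3$ of the form $$\mathcal{O}(-4)^{\oplus2}\xrightarrow{\alpha}\mathcal{O}(2)^{\oplus2}\oplus\mathcal{O}(1)\oplus\mathcal{O}(-2)\oplus\mathcal{O}(-3)^{\oplus2}\xrightarrow{\beta}\mathcal{O}(3)^{\oplus2}$$ (i.e. $\boldsymbol{a}=(3,3)$, $\boldsymbol{b}=(2,2,1)$).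
   Context: Work on $\mathbb{P}^3$ over an algebraically closed field; $\mathcal{O}=\mathcal{O}_{\mathbb{P}^3}$. A monad is a complex $\mathcal{C}\xrightarrow{\alpha}\mathcal{B}\xrightarrow{\beta}\mathcal{A}$ of vector bundles (so $\beta\circ\alpha=0$) with $\alpha$ injective and $\beta$ surjective; it is minimal if no entry of the matrices of $\alpha$ and $\beta$, as homogeneous forms, is a nonzero constant. *)

(* Defs.v *)
From HB Require Import structures.
From mathcomp Require Import all_boot all_order all_algebra.
From mathcomp Require Import mpoly.
Set Implicit Arguments. Unset Strict Implicit. Unset Printing Implicit Defensive.
Import Order.TTheory GRing.Theory Num.Theory.
Local Open Scope ring_scope.

(* Homogeneous coordinate ring of P^3 over k: k[x_0,x_1,x_2,x_3]. *)
Notation S3 k := {mpoly k[4]}.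

(* [p] is a homogeneous form of degree [d] (d an integer);
   a form of negative degree is 0 (Hom(O(e),O(e')) = H^0(O(e'-e))). *)
Definition homog_of_deg (k : closedFieldType) (d : int) (p : S3 k) : Prop :=
  if (0 <= d)%R then p \is (absz d).-homog else (p == 0).

Definition nonzero_const (k : closedFieldType) (p : S3 k) : Prop :=
  exists c : k, c != 0 /\ p = c%:MP.

(* Points of P^3: nonzero vectors of k^4 (homogeneous coordinates). *)
Definition nonzero_pt (k : closedFieldType) (x : 'I_4 -> k) : Prop :=
  exists i, x i != 0.

(* Evaluation of a matrix of forms at a point (the fibre map). *)
Definition eval_mx (k : closedFieldType) m n (x : 'I_4 -> k)
  (M : 'M[S3 k]_(m, n)) : 'M[k]_(m, n) := map_mx (meval x) M.

(* A morphism  \oplus_j O(src_j) -> \oplus_i O(tgt_i)  is a matrix whose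
   (i,j) entry is a form of degree tgt_i - src_j. *)
Definition is_morphism (k : closedFieldType) (src tgt : seq int)
  (M : 'M[S3 k]_(size tgt, size src)) : Prop :=
  forall (i : 'I_(size tgt)) (j : 'I_(size src)),
    homog_of_deg (tgt`_i - src`_j) (M i j).
Arguments is_morphism {k} src tgt M.

(* Minimal monad
     C = \oplus O(c_j) --alpha--> B = \oplus O(b_i) --beta--> A = \oplus O(a_l)
   on P^3: beta o alpha = 0, alpha injective (fibrewise, i.e. as a morphism of
   vector bundles), beta surjective (fibrewise), and no entry of alpha, beta
   is a nonzero constant. *)
Definition minimal_monad (k : closedFieldType) (c b a : seq int)
  (alpha : 'M[S3 k]_(size b, size c)) (beta : 'M[S3 k]_(size a, size b)) : Prop :=
  [/\ is_morphism c b alpha /\ is_morphism b a beta,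
      beta *m alpha = 0,
      (forall x, nonzero_pt x -> \rank (eval_mx x alpha) = size c),
      (forall x, nonzero_pt x -> \rank (eval_mx x beta) = size a) &
      ((forall i j, ~ nonzero_const (alpha i j)) /\
       (forall i j, ~ nonzero_const (beta i j)))].

Definition exists_minimal_monad (k : closedFieldType) (c b a : seq int) : Prop :=
  exists (alpha : 'M[S3 k]_(size b, size c)) (beta : 'M[S3 k]_(size a, size b)),
    minimal_monad alpha beta.

(* Main.v *)
Require Import Defs.
From mathcomp Require Import all_boot all_order all_algebra.
From mathcomp Require Import mpoly.
From mathcomp Require Import ring.
Local Open Scope ring_scope.
Import GRing.Theory.

Section Aux.
Variable k : closedFieldType.

Lemma det22 (F : comNzRingType) (B : 'M[F]_2) :
  \det B = B 0 0 * B 1 1 - B 0 1 * B 1 0.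
Proof.
rewrite (expand_det_row _ 0) !big_ord_recl big_ord0 /cofactor.
rewrite !det_mx11 !mxE /=.
have L1 : lift (0:'I_2) (0:'I_1) = 1 by apply/val_inj.
have L2 : lift (1:'I_2) (0:'I_1) = 0 by apply/val_inj.
rewrite !L1.
rewrite !L2 expr0 /= expr1 mul1r mulN1r addr0 mulrN.
by [].
Qed.

Lemma rank2 (F : fieldType) m (A : 'M[F]_(m, 2)) (i j : 'I_m) :
  A i 0 * A j 1 - A i 1 * A j 0 != 0 -> \rank A = 2%N.
Proof.
move=> hd; apply/eqP; rewrite eqn_leq rank_leq_col /=.
set B := rowsub (fun t : 'I_2 => if t == 0 then i else j) A.
have h1 : (\rank B <= \rank A)%N by apply/mxrankS/rowsub_sub.
have hB : B \in unitmx.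
  by rewrite unitmxE unitfE det22 !mxE /=.
by rewrite (mxrank_unit hB) in h1.
Qed.

Definition Hm d (p : S3 k) : Prop := p \is d.-homog.

Lemma hX (i : 'I_4) : Hm 1 ('X_i : S3 k).
Proof. by rewrite /Hm dhomogX /= mdeg1. Qed.

Lemma hM d e f (p q : S3 k) :
  Hm d p -> Hm e q -> (d + e)%N = f -> Hm f (p * q).
Proof. by rewrite /Hm => hp hq <-; apply: dhomogM. Qed.

Lemma hXn d f (p : S3 k) n :
  Hm d p -> (d * n)%N = f -> Hm f (p ^+ n).
Proof. by rewrite /Hm => hp <-; apply: dhomogMn. Qed.

Lemma hD d (p q : S3 k) : Hm d p -> Hm d q -> Hm d (p + q).
Proof. by rewrite /Hm => hp hq; apply: dhomogD. Qed.

Lemma hN d (p : S3 k) : Hm d p -> Hm d (- p).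
Proof. by rewrite /Hm dhomogN. Qed.

Lemma h0 d : Hm d (0 : S3 k).
Proof. exact: dhomog0. Qed.

End Aux.
Arguments Hm {k} d p.

Ltac hom :=
  lazymatch goal with
  | |- Hm _ (GRing.mul _ _) => eapply hM; [hom | hom | reflexivity]
  | |- Hm _ (GRing.exp _ _) => eapply hXn; [hom | reflexivity]
  | |- Hm _ (Algebra.add _ _) => eapply hD; [hom | hom]
  | |- Hm _ (Algebra.opp _) => eapply hN; hom
  | |- Hm _ _ => first [apply: hX | apply: h0]
  end.

Section Monads.
Variable k : closedFieldType.
Local Notation x := ('X_0 : S3 k).
Local Notation y := ('X_1 : S3 k).
Local Notation z := ('X_2 : S3 k).
Local Notation w := ('X_3 : S3 k).

Definition mk m n (L : seq (seq (S3 k))) : 'M[S3 k]_(m, n) :=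
  \matrix_(i, j) nth 0 (nth [::] L i) j.

Definition beta1 := mk 2 6
  [:: [:: x; y ^+ 3; x * w ^+ 2; w ^+ 6; y ^+ 2 * z ^+ 4; z ^+ 8];
      [:: 0; x; y; z ^+ 4; w ^+ 4; 0]].
Definition alpha1 := mk 6 2
  [:: [:: z ^+ 8; 0]; [:: w ^+ 6; z ^+ 4]; [:: y ^+ 2 * z ^+ 4; w ^+ 4];
      [:: - y ^+ 3; - x]; [:: - (x * w ^+ 2); - y]; [:: - x; 0]].
Definition beta2 := mk 2 6
  [:: [:: x; y; z ^+ 2; w ^+ 5; 0; 0];
      [:: 0; x; y * w; - (x * z ^+ 4) - y ^+ 5; z ^+ 6; w ^+ 6 + z ^+ 2 * y ^+ 4]].
Definition alpha2 := mk 6 2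
  [:: [:: 0; z ^+ 6]; [:: 0; w ^+ 6 + z ^+ 2 * y ^+ 4];
      [:: w ^+ 5; - (x * z ^+ 4) - y ^+ 5]; [:: - z ^+ 2; - (y * w)];
      [:: - x; 0]; [:: - y; - x]].

Lemma HmE d (p : S3 k) : Hm d p -> p \is d.-homog.
Proof. by []. Qed.

Lemma mor_b1 : is_morphism [:: 3%R; 1%R; 1%R; (-2)%R; (-2)%R; (-4)%R] [:: 4%R; 2%R] beta1.
Proof.
move=> i j; case: i => [[|[|i]] hi] //; case: j => [[|[|[|[|[|[|j]]]]]] hj] //;
  rewrite /homog_of_deg mxE /=; first [apply: HmE; hom | exact: eqxx].
Qed.

Lemma mor_b1_nz (i : 'I_(size ([:: 4%R; 2%R] : seq int))) (j : 'I_(size ([:: 3%R; 1%R; 1%R; (-2)%R; (-2)%R; (-4)%R] : seq int))) : (([:: 4%R; 2%R] : seq int)`_i - ([:: 3%R; 1%R; 1%R; (-2)%R; (-2)%R; (-4)%R] : seq int)`_j != 0)%R.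
Proof. case: i => [[|[|i]] hi] //; case: j => [[|[|[|[|[|[|j]]]]]] hj] //. Qed.

Lemma mor_a1 : is_morphism [:: (-5)%R; (-3)%R] [:: 3%R; 1%R; 1%R; (-2)%R; (-2)%R; (-4)%R] alpha1.
Proof.
move=> i j; case: i => [[|[|[|[|[|[|i]]]]]] hi] //; case: j => [[|[|j]] hj] //;
  rewrite /homog_of_deg mxE /=; first [apply: HmE; hom | exact: eqxx].
Qed.

Lemma mor_a1_nz (i : 'I_(size ([:: 3%R; 1%R; 1%R; (-2)%R; (-2)%R; (-4)%R] : seq int))) (j : 'I_(size ([:: (-5)%R; (-3)%R] : seq int))) : (([:: 3%R; 1%R; 1%R; (-2)%R; (-2)%R; (-4)%R] : seq int)`_i - ([:: (-5)%R; (-3)%R] : seq int)`_j != 0)%R.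
Proof. case: i => [[|[|[|[|[|[|i]]]]]] hi] //; case: j => [[|[|j]] hj] //. Qed.

Lemma mor_b2 : is_morphism [:: 2%R; 2%R; 1%R; (-2)%R; (-3)%R; (-3)%R] [:: 3%R; 3%R] beta2.
Proof.
move=> i j; case: i => [[|[|i]] hi] //; case: j => [[|[|[|[|[|[|j]]]]]] hj] //;
  rewrite /homog_of_deg mxE /=; first [apply: HmE; hom | exact: eqxx].
Qed.

Lemma mor_b2_nz (i : 'I_(size ([:: 3%R; 3%R] : seq int))) (j : 'I_(size ([:: 2%R; 2%R; 1%R; (-2)%R; (-3)%R; (-3)%R] : seq int))) : (([:: 3%R; 3%R] : seq int)`_i - ([:: 2%R; 2%R; 1%R; (-2)%R; (-3)%R; (-3)%R] : seq int)`_j != 0)%R.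
Proof. case: i => [[|[|i]] hi] //; case: j => [[|[|[|[|[|[|j]]]]]] hj] //. Qed.

Lemma mor_a2 : is_morphism [:: (-4)%R; (-4)%R] [:: 2%R; 2%R; 1%R; (-2)%R; (-3)%R; (-3)%R] alpha2.
Proof.
move=> i j; case: i => [[|[|[|[|[|[|i]]]]]] hi] //; case: j => [[|[|j]] hj] //;
  rewrite /homog_of_deg mxE /=; first [apply: HmE; hom | exact: eqxx].
Qed.

Lemma mor_a2_nz (i : 'I_(size ([:: 2%R; 2%R; 1%R; (-2)%R; (-3)%R; (-3)%R] : seq int))) (j : 'I_(size ([:: (-4)%R; (-4)%R] : seq int))) : (([:: 2%R; 2%R; 1%R; (-2)%R; (-3)%R; (-3)%R] : seq int)`_i - ([:: (-4)%R; (-4)%R] : seq int)`_j != 0)%R.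
Proof. case: i => [[|[|[|[|[|[|i]]]]]] hi] //; case: j => [[|[|j]] hj] //. Qed.

Lemma prod1 : beta1 *m alpha1 = 0.
Proof.
apply/matrixP => i j; rewrite !mxE !big_ord_recl big_ord0 !mxE.
case: i => [[|[|i]] hi] //; case: j => [[|[|j]] hj] //=; ring.
Qed.

Lemma prod2 : beta2 *m alpha2 = 0.
Proof.
apply/matrixP => i j; rewrite !mxE !big_ord_recl big_ord0 !mxE.
case: i => [[|[|i]] hi] //; case: j => [[|[|j]] hj] //=; ring.
Qed.

Lemma allz (v : 'I_4 -> k) : nonzero_pt v ->
  v 0 = 0 -> v 1 = 0 -> v 2 = 0 -> v 3 = 0 -> False.
Proof.
move=> [i hi] e0 e1 e2 e3; move: hi.
case: i => [[|[|[|[|i]]]] hi] //.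
- by rewrite (_ : Ordinal hi = 0) ?e0 ?eqxx //; apply/val_inj.
- by rewrite (_ : Ordinal hi = 1) ?e1 ?eqxx //; apply/val_inj.
- by rewrite (_ : Ordinal hi = 2) ?e2 ?eqxx //; apply/val_inj.
- by rewrite (_ : Ordinal hi = 3) ?e3 ?eqxx //; apply/val_inj.
Qed.

Ltac mcase I J T :=
  apply: (@rank2 _ _ _ (@Ordinal 6 I isT) (@Ordinal 6 J isT));
  rewrite /eval_mx !mxE /= !(mevalM, mevalN, mevalD, mevalB, mevalXU, meval0, rmorphXn);
  repeat match goal with H : _ = 0 |- _ => rewrite H; clear H end;
  rewrite (_ : _ - _ = T); [ rewrite ?oppr_eq0 expf_neq0 // | ring ].

Lemma rk_b1 (v : 'I_4 -> k) : nonzero_pt v -> \rank (eval_mx v beta1) = 2%N.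
Proof.
move=> hv; rewrite -mxrank_tr.
have [e0|n0] := eqVneq (v 0) 0; last by mcase 0%N 1%N (v 0 ^+ 2).
have [e1|n1] := eqVneq (v 1) 0; last by mcase 1%N 2%N (v 1 ^+ 4).
have [e2|n2] := eqVneq (v 2) 0; last by mcase 3%N 5%N (- v 2 ^+ 12).
have [e3|n3] := eqVneq (v 3) 0; last by mcase 3%N 4%N (v 3 ^+ 10).
by case: (@allz v hv e0 e1 e2 e3 : False).
Qed.

Lemma rk_a1 (v : 'I_4 -> k) : nonzero_pt v -> \rank (eval_mx v alpha1) = 2%N.
Proof.
move=> hv; 
have [e0|n0] := eqVneq (v 0) 0; last by mcase 3%N 5%N (- v 0 ^+ 2).
have [e1|n1] := eqVneq (v 1) 0; last by mcase 3%N 4%N (v 1 ^+ 4).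
have [e2|n2] := eqVneq (v 2) 0; last by mcase 0%N 1%N (v 2 ^+ 12).
have [e3|n3] := eqVneq (v 3) 0; last by mcase 1%N 2%N (v 3 ^+ 10).
by case: (@allz v hv e0 e1 e2 e3 : False).
Qed.

Lemma rk_b2 (v : 'I_4 -> k) : nonzero_pt v -> \rank (eval_mx v beta2) = 2%N.
Proof.
move=> hv; rewrite -mxrank_tr.
have [e0|n0] := eqVneq (v 0) 0; last by mcase 0%N 1%N (v 0 ^+ 2).
have [e1|n1] := eqVneq (v 1) 0; last by mcase 1%N 3%N (- v 1 ^+ 6).
have [e2|n2] := eqVneq (v 2) 0; last by mcase 2%N 4%N (v 2 ^+ 8).
have [e3|n3] := eqVneq (v 3) 0; last by mcase 3%N 5%N (v 3 ^+ 11).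
by case: (@allz v hv e0 e1 e2 e3 : False).
Qed.

Lemma rk_a2 (v : 'I_4 -> k) : nonzero_pt v -> \rank (eval_mx v alpha2) = 2%N.
Proof.
move=> hv; 
have [e0|n0] := eqVneq (v 0) 0; last by mcase 4%N 5%N (v 0 ^+ 2).
have [e1|n1] := eqVneq (v 1) 0; last by mcase 2%N 5%N (- v 1 ^+ 6).
have [e2|n2] := eqVneq (v 2) 0; last by mcase 0%N 3%N (v 2 ^+ 8).
have [e3|n3] := eqVneq (v 3) 0; last by mcase 1%N 2%N (- v 3 ^+ 11).
by case: (@allz v hv e0 e1 e2 e3 : False).
Qed.

Lemma nonconst (d : int) (p : S3 k) : homog_of_deg d p -> d != 0 -> ~ nonzero_const p.
Proof.
rewrite /homog_of_deg => hp hd [c [hc ep]]; subst p.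
case: ifP hp => hd0 hp.
- have hc0 : (c%:MP : S3 k) \is 0.-homog.
    have -> : (c%:MP : S3 k) = c *: 1 by rewrite -mul_mpolyC mulr1.
    by apply: dhomogZ; apply: dhomog1.
  have hnz : (c%:MP : S3 k) != 0 by rewrite mpolyC_eq0.
  have := dhomog_uniq hnz hp hc0.
  by move/eqP; rewrite absz_eq0 (negbTE hd).
- by move: hp; rewrite mpolyC_eq0 (negbTE hc).
Qed.

End Monads.

Theorem proposition13 (k : closedFieldType) :
  exists_minimal_monad k
    [:: (-5)%R; (-3)%R] [:: 3%R; 1%R; 1%R; (-2)%R; (-2)%R; (-4)%R] [:: 4%R; 2%R]
  /\
  exists_minimal_monad k
    [:: (-4)%R; (-4)%R] [:: 2%R; 2%R; 1%R; (-2)%R; (-3)%R; (-3)%R] [:: 3%R; 3%R].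
Proof.
split.
- exists (alpha1 k), (beta1 k); split.
  + by split; [exact: mor_a1 | exact: mor_b1].
  + exact: prod1.
  + exact: rk_a1.
  + exact: rk_b1.
  + split=> i j.
    * apply: nonconst; [exact: mor_a1 | exact: mor_a1_nz].
    * apply: nonconst; [exact: mor_b1 | exact: mor_b1_nz].
- exists (alpha2 k), (beta2 k); split.
  + by split; [exact: mor_a2 | exact: mor_b2].
  + exact: prod2.
  + exact: rk_a2.
  + exact: rk_b2.
  + split=> i j.
    * apply: nonconst; [exact: mor_a2 | exact: mor_a2_nz].
    * apply: nonconst; [exact: mor_b2 | exact: mor_b2_nz].
Qed.
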